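(* Let $A$ be a power bounded linear operator of a Banach space $X$, i.e. $\sup_{k\ge0}\|A^k\|<\infty$. Let $\|x\|_1:=\sup_{k\geq0}\|A^{k}x\|$ for $x\in X$. Then for any $v\in X$ there is a metric functional $h$ of $X$ equipped with the metric $d_1(x,y)=\|x-y\|_1$ and base point $0$, such that \[ h\Big(\sum_{k=0}^{n-1}A^{k}v\Big)\leq-n\tau\quad\text{for all }n>0, \] where $\tau=\inf_{x\in X}\|Ax+v-x\|_1$.
   Context: For a metric space $(X,d_1)$ with base point $0$, let $\mathrm{Hom}(X,\mathbb{R})$ be the set of $1$-Lipschitz functions $X\to\mathbb{R}$ with the topology of pointwise convergence and $h_y(\cdot)=d_1(\cdot,y)-d_1(0,y)$. A metric functional is an element of the closure of $\{h_y:y\in X\}$ in $\mathrm{Hom}(X,\mathbb{R})$. *)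

(* Defs.v *)
From HB Require Import structures.
From mathcomp Require Import all_boot all_order all_algebra.
From mathcomp Require Import all_classical all_reals all_analysis.
Set Implicit Arguments. Unset Strict Implicit. Unset Printing Implicit Defensive.
Import Order.TTheory GRing.Theory Num.Theory.
Import numFieldNormedType.Exports.
Local Open Scope classical_set_scope.
Local Open Scope ring_scope.

Definition pnorm (R : realType) (X : normedModType R) (A : X -> X) (x : X) : R :=
  sup [set `|iter k A x| | k in [set: nat]].

Definition hfun (X : Type) (R : realType) (d1 : X -> X -> R) (x0 y : X) : X -> R :=
  fun x => d1 x y - d1 x0 y.

Definition lip1 (X : Type) (R : realType) (d1 : X -> X -> R) (h : X -> R) : Prop :=
  forall x y, `|h x - h y| <= d1 x y.

Definition metric_functional (X : Type) (R : realType) (d1 : X -> X -> R)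
    (x0 : X) (h : X -> R) : Prop :=
  lip1 d1 h /\
  (closure (range (hfun d1 x0) : set {ptws X -> R})) h.

(* Main.v *)
Require Import Defs.
From HB Require Import structures.
From mathcomp Require Import all_boot all_order all_algebra.
From mathcomp Require Import all_classical all_reals all_analysis.
From mathcomp Require Import lra.
Import Order.TTheory GRing.Theory Num.Theory.
Import numFieldNormedType.Exports.
Local Open Scope classical_set_scope.
Local Open Scope ring_scope.

Section PN.
Context {R : realType} {X : normedModType R} {A : {linear X -> X}} {M : R}.
Hypothesis HM : forall k x, `|iter k A x| <= M * `|x|.

Lemma iterA_D k x y : iter k A (x + y) = iter k A x + iter k A y.
Proof. by elim: k => //= k ->; rewrite linearD. Qed.

Lemma iterA_N k x : iter k A (- x) = - iter k A x.
Proof. by elim: k => //= k ->; rewrite linearN. Qed.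

Lemma iterA_Z k c x : iter k A (c *: x) = c *: iter k A x.
Proof. by elim: k => //= k ->; rewrite linearZ. Qed.

Lemma pn_has_ub x : has_ubound [set `|iter k A x| | k in [set: nat]].
Proof. by exists (M * `|x|) => _ [k _ <-]; exact: HM. Qed.

Lemma pn_ge k x : `|iter k A x| <= pnorm A x.
Proof. by apply: (ub_le_sup (pn_has_ub x)); exists k. Qed.

Lemma pn_le x c : (forall k, `|iter k A x| <= c) -> pnorm A x <= c.
Proof.
move=> H; apply: ge_sup; first by exists `|iter 0 A x|, 0%N.
by move=> _ [k _ <-].
Qed.

Lemma pn_ge0 x : 0 <= pnorm A x.
Proof. exact: le_trans (normr_ge0 _) (pn_ge 0 x). Qed.

Lemma pn_tri x y : pnorm A (x + y) <= pnorm A x + pnorm A y.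
Proof.
apply: pn_le => k; rewrite iterA_D; apply: le_trans (ler_normD _ _) _.
by apply: lerD; apply: pn_ge.
Qed.

Lemma pn_opp x : pnorm A (- x) = pnorm A x.
Proof.
apply/eqP; rewrite eq_le; apply/andP; split; apply: pn_le => k.
  by rewrite iterA_N normrN; apply: pn_ge.
by rewrite -normrN -iterA_N; apply: pn_ge.
Qed.

Lemma pn_iter n x : pnorm A (iter n A x) <= pnorm A x.
Proof. by apply: pn_le => k; rewrite -iterD; apply: pn_ge. Qed.

Lemma pn_scale c x : 0 <= c -> pnorm A (c *: x) <= c * pnorm A x.
Proof.
move=> c0; apply: pn_le => k; rewrite iterA_Z normrZ ger0_norm //.
by apply: ler_wpM2l => //; apply: pn_ge.
Qed.

Lemma pn_lip x x' y :
  `|(pnorm A (x - y) - pnorm A (0 - y)) - (pnorm A (x' - y) - pnorm A (0 - y))|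
  <= pnorm A (x - x').
Proof.
rewrite opprB addrA subrK; rewrite ler_norml; apply/andP; split.
  have := pn_tri (x' - x) (x - y); rewrite addrA subrK.
  rewrite -(pn_opp (x' - x)) opprB => H; lra.
have := pn_tri (x - x') (x' - y); rewrite addrA subrK => H; lra.
Qed.

End PN.

Lemma record (R : realType) (b : nat -> R) (hb : forall m, 0 <= b m)
  (e : R) (he : 0 < e) (N : nat) :
  exists m, (N <= m)%N /\ forall k, (k <= N)%N -> b (m - k)%N <= b m + e.
Proof.
case: N => [|N].
  exists 0%N; split => // k; rewrite leqn0 => /eqP ->; rewrite subn0; lra.
apply: contrapT => Hn.
have H : forall m, (N.+1 <= m)%N -> exists k, [/\ (0 < k)%N, (k <= N.+1)%N & b m + e < b (m - k)%N].
  move=> m Hm; apply: contrapT => Hk; apply: Hn; exists m; split => // k Hk1.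
  rewrite leNgt; apply/negP => Hlt; apply: Hk; exists k; split => //.
  rewrite lt0n; apply/negP => /eqP k0; move: Hlt; rewrite k0 subn0; lra.
set C := \sum_(r < N.+1) b r.
set q := e / N.+1%:R.
have q0 : 0 < q by apply: divr_gt0 => //; rewrite ltr0n.
have Nq : N.+1%:R * q = e by rewrite /q mulrC -mulrA mulVf ?mulr1 // pnatr_eq0.
have kq k : (k <= N.+1)%N -> k%:R * q <= e.
  by move=> Hk; rewrite -Nq; apply: ler_wpM2r; [lra| rewrite ler_nat].
have C0 : 0 <= C by apply: sumr_ge0.
have Hf : forall m, b m <= C + e - m%:R * q.
  elim/ltn_ind => m IH.
  case: (ltnP m N.+1) => Hm.
    have -> : b m = b (Ordinal Hm) by [].
    have H1 : b (Ordinal Hm) <= C.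
      rewrite /C (bigD1 (Ordinal Hm)) //= lerDl; exact: sumr_ge0.
    have := kq m (ltnW Hm); lra.
  have [k [k0 kN Hk]] := H m Hm.
  have := IH (m - k)%N; rewrite ltn_subrL k0 /= => /(_ (leq_trans (ltn0Sn N) Hm)).
  rewrite natrB; last by apply: leq_trans kN Hm.
  rewrite mulrBl; have := kq k kN; lra.
have [N0 _ HN0] := nbhs_infty_gtr ((C + e) / q).
have := Hf (maxn N0 N.+1); have := HN0 (maxn N0 N.+1) (leq_maxl _ _).
rewrite /= ltr_pdivrMr // => H1 H2; have := hb (maxn N0 N.+1); lra.
Qed.

Lemma nbhs_eval (R : realType) (X : normedModType R) (h : {ptws X -> R}) (x : X) (P : set R) :
  nbhs (h x) P -> nbhs h [set f : {ptws X -> R} | P (f x)].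
Proof. move=> hP; exact: (@proj_continuous X (fun _ => R) x h _ hP). Qed.

Lemma norm3 (R : realType) (a b c d : R) :
  `|a - d| <= `|a - b| + `|b - c| + `|c - d|.
Proof.
have -> : a - d = (a - b) + (b - c) + (c - d) by rewrite !addrA !subrK.
exact: le_trans (ler_normD _ _) (lerD (ler_normD _ _) (lexx _)).
Qed.

Section Seq.
Variables (R : realType) (X : normedModType R) (A : {linear X -> X}) (v : X) (M : R).
Hypothesis HM : forall k x, `|iter k A x| <= M * `|x|.
Let S n := \sum_(k < n) iter k A v.

Lemma S_split n m : S (n + m) = S n + iter n A (S m).
Proof.
elim: m => [|m IH].
  rewrite addn0 /S big_ord0.
  have -> : iter n A 0 = 0.
    have := @iterA_Z _ _ A n 0 0; by rewrite !scale0r.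
  by rewrite addr0.
rewrite addnS /S big_ord_recr /= -/(S (n + m)) IH big_ord_recr /= iterA_D iterD.
by rewrite addrA.
Qed.

Lemma S_succ m : S m.+1 = v + A (S m).
Proof.
have := S_split 1 m; rewrite add1n => ->.
by rewrite /S big_ord1.
Qed.

Lemma W_id m : A (\sum_(k < m) S k) + m%:R *: v = \sum_(k < m) S k + S m.
Proof.
elim: m => [|m IH].
  rewrite !big_ord0 /S big_ord0 scale0r addr0 add0r.
  by rewrite raddf0.
rewrite big_ord_recr /= linearD mulrSr scalerDl scale1r addrACA IH S_succ.
by rewrite [A (S m) + v]addrC.
Qed.

Lemma S_lower m :
  m%:R * inf [set pnorm A (A x + v - x) | x in [set: X]] <= pnorm A (S m).
Proof.
set tau := inf _.
case: m => [|m]; first by rewrite mul0r /S big_ord0; exact: (pn_ge0 HM).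
set W := \sum_(k < m.+1) S k.
set c := (m.+1%:R : R)^-1.
have c0 : 0 <= c by rewrite /c invr_ge0 ler0n.
have cm : c * m.+1%:R = 1 by rewrite /c mulVf // pnatr_eq0.
have E : A (c *: W) + v - c *: W = c *: S m.+1.
  have -> : S m.+1 = A W + m.+1%:R *: v - W by rewrite W_id addrAC subrr add0r.
  by rewrite linearZ !scalerDr scalerN scalerA cm scale1r.
have : tau <= pnorm A (c *: S m.+1).
  rewrite -E; apply: (ge_inf); last by exists (c *: W).
  by exists 0 => _ [x _ <-]; apply: (pn_ge0 HM).
move=> H; have H2 := le_trans H (pn_scale HM c (S m.+1) c0).
have := ler_wpM2l (ler0n R m.+1) H2.
by rewrite mulrA [m.+1%:R * c]mulrC cm mul1r.
Qed.

End Seq.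

Theorem corollary18 (R : realType) (X : completeNormedModType R)
    (A : {linear X -> X})
    (Hpb : exists M : R, forall (k : nat) (x : X), `|iter k A x| <= M * `|x|)
    (v : X) :
  let d1 := fun x y : X => pnorm A (x - y) in
  let tau := inf [set pnorm A (A x + v - x) | x in [set: X]] in
  exists h : X -> R, metric_functional d1 0 h /\
    forall n : nat, (0 < n)%N ->
      h (\sum_(k < n) iter k A v) <= - (n%:R * tau).
Proof.
move=> d1 tau.
have [M HM] := Hpb.
set S := fun n => \sum_(k < n) iter k A v.
set b := fun m => pnorm A (S m) - m%:R * tau.
have hb : forall m, 0 <= b m by move=> m; rewrite subr_ge0; exact: (@S_lower _ _ A v M HM m).
have epos : forall j : nat, 0 < (j.+1%:R : R)^-1 by move=> j; rewrite invr_gt0 ltr0n.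
have [ms Hms] := choice (fun j => @record _ b hb _ (epos j) j).
pose g : nat -> {ptws X -> R} := fun j => hfun d1 0 (S (ms j)).
have glip : forall y, lip1 d1 (hfun d1 0 y).
  by move=> y x x'; rewrite /hfun /d1; exact: (pn_lip HM).
have gbound : forall j n, (n <= j)%N -> g j (S n) <= (j.+1%:R)^-1 - n%:R * tau.
  move=> j n nj; have [mj Hk] := Hms j.
  have nm : (n <= ms j)%N by apply: leq_trans nj mj.
  rewrite /g /hfun /d1.
  have e1 : S n - S (ms j) = - iter n A (S (ms j - n)%N).
    have -> : S (ms j) = S (n + (ms j - n))%N by rewrite subnKC.
    by rewrite /S (@S_split _ _ A v n (ms j - n)) opprD addrA subrr sub0r.
  rewrite e1 (pn_opp HM) sub0r (pn_opp HM).
  have := pn_iter HM n (S (ms j - n)%N).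
  have := Hk n nj; rewrite /b natrB // mulrBl=> H1 H2; move: H1 H2; set P1 := pnorm A _; set P2 := pnorm A _; set P3 := pnorm A _; set t1 := n%:R * tau; set t2 := (ms j)%:R * tau; set e := j.+1%:R^-1; clearbody P1 P2 P3 t1 t2 e; move=> H1 H2; lra.
have Kc := tychonoff (I := X) (T := fun _ => R)
  (A := fun x => `[- pnorm A x, pnorm A x]%classic) (fun x => @segment_compact _ _ _).
have PF : ProperFilter (g @ \oo) by exact: fmap_proper_filter.
have FK : (g @ \oo) [set f : forall i : X, R | forall i, `[- pnorm A i, pnorm A i]%classic (f i)].
  exists 0%N => // j _ x /=; rewrite in_itv /= -ler_norml.
  have := glip (S (ms j)) x 0; rewrite /hfun /d1 subr0 subrr subr0; exact.
have [h [Kh clh]] := Kc _ PF FK.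
have Frange : (g @ \oo) (range (hfun d1 0)).
  by exists 0%N => // j _; exists (S (ms j)).
exists h; split; [split|].
- move=> x y; rewrite leNgt; apply/negP => Hc.
  set δ := (`|h x - h y| - d1 x y) / 2.
  have δ0 : 0 < δ by apply: divr_gt0 => //; lra.
  have Bx := @nbhs_eval _ _ h x _ (nbhsx_ballx (h x) δ δ0).
  have By := @nbhs_eval _ _ h y _ (nbhsx_ballx (h y) δ δ0).
  have [f [[z _ <-] [Hx Hy]]] := clh _ _ Frange (filterI Bx By).
  move: Hx Hy; rewrite -ball_normE /ball_ /= => Hx Hy.
  have := glip z x y; have := @norm3 _ (h x) (hfun d1 0 z x) (hfun d1 0 z y) (h y).
  rewrite (distrC (hfun d1 0 z y)).
  rewrite /δ in Hx Hy; lra.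
- by move=> B nB; exact: clh _ _ Frange nB.
- move=> n n0; rewrite leNgt; apply/negP => Hc.
  set δ := h (S n) + n%:R * tau.
  have δ0 : 0 < δ by rewrite /δ; lra.
  have δ20 : 0 < δ / 2 by apply: divr_gt0.
  have Bn := @nbhs_eval _ _ h (S n) _ (nbhsx_ballx (h (S n)) (δ / 2) δ20).
  have FA : (g @ \oo) [set f | exists j, [/\ (n <= j)%N, 2 / δ < j%:R & f = g j]].
    apply: filterS (filterI (nbhs_infty_ge n) (nbhs_infty_gtr (2 / δ))).
    by move=> j [H1 H2]; exists j.
  have [f [[j [nj Hj ->]] Hb]] := clh _ _ FA Bn.
  move: Hb; rewrite -ball_normE /ball_ /= => Hb.
  have := gbound j n nj.
  have Hinv : (j.+1%:R : R)^-1 < δ / 2.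
    rewrite invf_plt ?posrE ?ltr0n // invf_div.
    by apply: lt_trans Hj _; rewrite ltr_nat.
  have H1 := ler_norm (h (S n) - g j (S n)).
  move=> Hg; move: Hinv Hg; set e := (j.+1%:R : R)^-1; clearbody e => Hinv Hg.
  rewrite /δ in Hb Hinv δ0; move: Hc Hb Hinv Hg H1 δ0; rewrite -/(S n); set a := h (S n); set gg := g j (S n); set t := n%:R * tau; set nr := `|a - gg|; clearbody a gg t nr; move=> Hc Hb Hinv Hg H1 δ0; lra.
Qed.
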